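(* Let $\rho_{ABE}=\sum_ap_A(a)|a\rangle\langle a|\otimes\rho^{|a}_{BE}$ be a state with $A$ and $B$ classical, and let $\rho_E=\mathrm{tr}_{AB}[\rho_{ABE}]=\sum_ap_A(a)\rho^{|a}_E$ with $\rho^{|a}_E=\mathrm{tr}_B[\rho^{|a}_{BE}]$. Then for all $a$ with $p_A(a)>0$ and all $\alpha\in[1,\infty]$, $$2^{(\alpha-1)D_\alpha(\rho^{|a}_{BE}\|I_B\otimes\rho_E)}\le p_A(a)^{1-\alpha}.$$
   Context: $\log$ base 2. For $\alpha\in(1,\infty)$, $D_\alpha(\rho\|\sigma)=\frac{1}{\alpha-1}\log\big(\mathrm{tr}[(\sigma^{\frac{1-\alpha}{2\alpha}}\rho\sigma^{\frac{1-\alpha}{2\alpha}})^\alpha]/\mathrm{tr}\rho\big)$ if $\mathrm{supp}\rho\subseteq\mathrm{supp}\sigma$, else $+\infty$; $D_1$ is the Umegaki relative entropy $\mathrm{tr}[\rho(\log\rho-\log\sigma)]$ and $D_\infty(\rho\|\sigma)=\inf\{\lambda:\rho\le2^\lambda\sigma\}$ is the max-divergence. *)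

(* Defs.v *)
From HB Require Import structures.
From mathcomp Require Import all_boot all_order all_algebra.
From mathcomp Require Import all_classical all_reals all_analysis.
From mathcomp Require Import complex.
From mathcomp Require mxtens.

Set Implicit Arguments.
Unset Strict Implicit.
Unset Printing Implicit Defensive.

Import Order.TTheory GRing.Theory Num.Theory.
Local Open Scope ring_scope.

Definition log2 {R : realType} (x : R) : R := ln x / ln 2.

Definition exp2e {R : realType} (x : \bar R) : \bar R :=
  match x with
  | r%:E => (2 `^ r)%:E
  | +oo%E => +oo%E
  | -oo%E => 0%:E
  end.

Definition adjmx {R : realType} {m n : nat} (M : 'M[R[i]]_(m, n)) : 'M[R[i]]_(n, m) :=
  (map_mx Num.conj M)^T.

Definition psd {R : realType} {n : nat} (M : 'M[R[i]]_n) : Prop :=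
  M = adjmx M /\ forall v : 'rV[R[i]]_n, 0 <= (v *m M *m adjmx v) 0 0.

Definition density {R : realType} {n : nat} (M : 'M[R[i]]_n) : Prop :=
  psd M /\ \tr M = 1.

Definition loewner_le {R : realType} {n : nat} (A B : 'M[R[i]]_n) : Prop :=
  psd (B - A).

Definition mxfun {R : realType} {n : nat} (f : R -> R) (M : 'M[R[i]]_n) : 'M[R[i]]_n :=
  invmx (spectralmx M) *m
    diag_mx (map_mx (fun z : R[i] => ((f (complex.Re z))%:C)%C) (spectral_diag M))
  *m spectralmx M.

(* generalized power M^s of a PSD matrix (taken on the support, 0 on the kernel) *)
Definition mxpow {R : realType} {n : nat} (M : 'M[R[i]]_n) (s : R) : 'M[R[i]]_n :=
  mxfun (fun x => if x <= 0 then 0 else x `^ s) M.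

Definition mxlog2 {R : realType} {n : nat} (M : 'M[R[i]]_n) : 'M[R[i]]_n :=
  mxfun (fun x => if x <= 0 then 0 else log2 x) M.

(* supp rho \subseteq supp sigma (for Hermitian matrices the support is the
   row space) *)
Definition supp_sub {R : realType} {n : nat} (rho sigma : 'M[R[i]]_n) : bool :=
  (rho <= sigma)%MS.

Definition D_sand {R : realType} {n : nat} (alpha : R) (rho sigma : 'M[R[i]]_n) : \bar R :=
  if supp_sub rho sigma then
    let s := (1 - alpha) / (2 * alpha) in
    ((alpha - 1)^-1 *
       log2 (complex.Re (\tr (mxpow (mxpow sigma s *m rho *m mxpow sigma s) alpha))
             / complex.Re (\tr rho)))%:E
  else +oo%E.

Definition D_umegaki {R : realType} {n : nat} (rho sigma : 'M[R[i]]_n) : \bar R :=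
  if supp_sub rho sigma then
    (complex.Re (\tr (rho *m (mxlog2 rho - mxlog2 sigma))))%:E
  else +oo%E.

Definition D_alpha {R : realType} {n : nat} (alpha : R) (rho sigma : 'M[R[i]]_n) : \bar R :=
  if alpha == 1 then D_umegaki rho sigma else D_sand alpha rho sigma.

Definition D_max {R : realType} {n : nat} (rho sigma : 'M[R[i]]_n) : \bar R :=
  ereal_inf [set (l%:E) | l in [set l : R | loewner_le rho (((2 `^ l)%:C)%C *: sigma)]].

Definition tens {R : realType} {m n : nat} (X : 'M[R[i]]_m) (Y : 'M[R[i]]_n)
  : 'M[R[i]]_(m * n) := mxtens.tensmx X Y.

Definition ptrace1 {R : realType} {nB nE : nat} (M : 'M[R[i]]_(nB * nE)) : 'M[R[i]]_nE :=
  \matrix_(i, j) \sum_(b < nB) M (mxtens.mxtens_index (b, i)) (mxtens.mxtens_index (b, j)).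

Definition classical_B {R : realType} {nB nE : nat} (M : 'M[R[i]]_(nB * nE)) : Prop :=
  exists omega : 'I_nB -> 'M[R[i]]_nE,
    M = \sum_(b < nB) tens (delta_mx b b) (omega b).

Definition rhoE {R : realType} {A : finType} {nB nE : nat}
  (p : A -> R) (rhoBE : A -> 'M[R[i]]_(nB * nE)) : 'M[R[i]]_nE :=
  \sum_(a : A) ((p a)%:C)%C *: ptrace1 (rhoBE a).

(* Main.v *)
Require Import Defs.
From HB Require Import structures.
From mathcomp Require Import all_boot all_order all_algebra.
From mathcomp Require Import all_classical all_reals all_analysis.
From mathcomp Require Import complex.
From mathcomp Require Import spectral sesquilinear.
From mathcomp Require Import ring lra.
From mathcomp Require mxtens.
Import Order.TTheory GRing.Theory Num.Theory.
Local Open Scope ring_scope.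
Set Implicit Arguments.
Unset Strict Implicit.
Unset Printing Implicit Defensive.

Lemma young_pt {R : realType} (al y m : R) : 1 < al -> 0 <= y -> 0 < m ->
  al * (m `^ (al - 1) * y `^ (al^-1)) <= y + (al - 1) * m `^ al.
Proof.
move=> a1 y0 m0.
have a0 : 0 < al by lra.
have q0 : 0 < al / (al - 1) by rewrite divr_gt0 // subr_gt0.
have pq : al^-1 + (al / (al - 1))^-1 = 1.
  rewrite invf_div -[X in X + _]mul1r -mulrDl addrC subrK mulfV //; lra.
have := @conjugate_powR R (y `^ (al^-1)) (m `^ (al - 1)) al (al / (al - 1))
  (powR_ge0 _ _) (powR_ge0 _ _) a0 q0 pq.
rewrite -!powRrM.
have -> : al^-1 * al = 1 by rewrite mulVf ?gt_eqF.
have -> : (al - 1) * (al / (al - 1)) = al.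
  by rewrite mulrCA mulfV ?mulr1 // subr_eq0 gt_eqF.
rewrite powRr1 // => h.
have h2 := ler_wpM2l (ltW a0) h.
rewrite [m `^ _ * _]mulrC (le_trans h2) // le_eqVlt; apply/orP; left; apply/eqP.
have ha : al != 0 by rewrite gt_eqF.
have hb : al - 1 != 0 by rewrite subr_eq0 gt_eqF.
by field; rewrite ha hb.
Qed.
Lemma jensen_pow {R : realType} (I : finType) (al c e : R) (b y : I -> R) :
  1 < al -> 0 < c -> 0 < e -> (forall i, 0 <= b i) -> (forall i, 0 <= y i) ->
  e = \sum_i b i * y i `^ (al^-1) -> \sum_i b i <= c ->
  e `^ al <= c `^ (al - 1) * \sum_i b i * y i.
Proof.
move=> a1 c0 e0 b0 y0 eE Wc.
set W := \sum_i b i.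
have W0 : 0 < W.
  rewrite lt_neqAle sumr_ge0 // andbT; apply/negP => /eqP/esym/psumr_eq0P h.
  have hb := h (fun i _ => b0 i).
  by move: e0; rewrite eE big1 ?ltxx // => i _; rewrite hb // mul0r.
set mu := e / W.
have mu0 : 0 < mu by rewrite divr_gt0.
have muW : mu * W = e by rewrite /mu divfK ?gt_eqF.
have key : al * (mu `^ (al - 1) * (\sum_i b i * y i `^ (al^-1))) <= \sum_i b i * y i + (al - 1) * mu `^ al * W.
  rewrite mulr_sumr mulr_sumr /W mulr_sumr -big_split /=.
  apply: ler_sum => i _.
  have := @young_pt R al (y i) mu a1 (y0 i) mu0.
  move=> h; have := ler_wpM2l (b0 i) h.
  rewrite mulrDr => h2; apply: le_trans (le_trans _ h2) _.
    by rewrite le_eqVlt; apply/orP; left; apply/eqP; ring.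
  by rewrite le_eqVlt; apply/orP; left; apply/eqP; ring.
have muA : mu `^ al = mu `^ (al - 1) * mu.
  have := @powRD R mu (al - 1) 1; rewrite subrK powRr1 ?ltW // => -> //.
  by apply/implyP => _; rewrite gt_eqF.
have eq1 : (al - 1) * mu `^ al * W = (al - 1) * (mu `^ (al - 1) * e).
  by rewrite muA -muW; ring.
rewrite -eE eq1 in key.
have step : mu `^ (al - 1) * e <= \sum_i b i * y i.
  have : al * (mu `^ (al - 1) * e) - (al - 1) * (mu `^ (al - 1) * e)
         <= \sum_i b i * y i.
    rewrite lerBlDr; apply: le_trans key _.
    by rewrite le_eqVlt; apply/orP; left; apply/eqP; ring.
  by apply: le_trans; rewrite le_eqVlt; apply/orP; left; apply/eqP; ring.
have ecm : e <= c * mu by rewrite -muW mulrC ler_wpM2r // ltW.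
have eA : e `^ al = e `^ (al - 1) * e.
  have := @powRD R e (al - 1) 1; rewrite subrK powRr1 ?ltW // => -> //.
  by apply/implyP => _; rewrite gt_eqF.
rewrite eA.
have st2 := ler_wpM2l (powR_ge0 c (al - 1)) step.
suff g : e `^ (al - 1) * e <= c `^ (al - 1) * (mu `^ (al - 1) * e).
  exact: le_trans g st2.
rewrite mulrA -powRM; [|exact: ltW|exact: ltW].
rewrite ler_pM2r //.
apply: ge0_ler_powR => //; first by rewrite subr_ge0 ltW.
- by rewrite nnegrE ltW.
- by rewrite nnegrE mulr_ge0 ?ltW.
Qed.

Lemma adjmxK {R : realType} {m n} (A : 'M[R[i]]_(m,n)) : adjmx (adjmx A) = A.
Proof.
rewrite /adjmx map_trmx trmxK -map_mx_comp; apply/matrixP=> i j; rewrite !mxE /=.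
exact: conjCK.
Qed.
Lemma adjmxM {R : realType} {m n p} (A : 'M[R[i]]_(m,n)) (B : 'M[R[i]]_(n,p)) :
  adjmx (A *m B) = adjmx B *m adjmx A.
Proof. by rewrite /adjmx map_mxM trmx_mul. Qed.
Lemma adjmxD {R : realType} {m n} (A B : 'M[R[i]]_(m,n)) :
  adjmx (A + B) = adjmx A + adjmx B.
Proof. by rewrite /adjmx map_mxD linearD. Qed.
Lemma adjmxN {R : realType} {m n} (A : 'M[R[i]]_(m,n)) :
  adjmx (- A) = - adjmx A.
Proof. by rewrite /adjmx map_mxN linearN. Qed.
Lemma adjmxB {R : realType} {m n} (A B : 'M[R[i]]_(m,n)) :
  adjmx (A - B) = adjmx A - adjmx B.
Proof. by rewrite adjmxD adjmxN. Qed.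
Lemma adjmxZ {R : realType} {m n} (a : R[i]) (A : 'M[R[i]]_(m,n)) :
  adjmx (a *: A) = Num.conj a *: adjmx A.
Proof. by apply/matrixP=> i j; rewrite !mxE rmorphM. Qed.
Lemma adjmx1 {R : realType} {n} : adjmx (1%:M : 'M[R[i]]_n) = 1%:M.
Proof. by rewrite /adjmx map_mx1 trmx1. Qed.
Lemma adjmx0 {R : realType} {m n} : adjmx (0 : 'M[R[i]]_(m,n)) = 0.
Proof. by rewrite /adjmx map_mx0 trmx0. Qed.
Lemma adjmx_sum {R : realType} {m n} (I : finType) (F : I -> 'M[R[i]]_(m,n)) :
  adjmx (\sum_i F i) = \sum_i adjmx (F i).
Proof.
apply/matrixP=> i j; rewrite [LHS]mxE [RHS]summxE mxE summxE rmorph_sum.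
by apply: eq_bigr => k _; rewrite !mxE.
Qed.
Lemma adjmx_diag {R : realType} {n} (d : 'rV[R[i]]_n) :
  adjmx (diag_mx d) = diag_mx (map_mx Num.conj d).
Proof.
apply/matrixP=> i j; rewrite !mxE eq_sym; case: eqP => [->|_]; first by rewrite mulr1n.
by rewrite mulr0n rmorph0.
Qed.
Lemma adjmx_tC {R : realType} {m n} (A : 'M[R[i]]_(m,n)) : map_mx Num.conj (A ^T) = adjmx A.
Proof. by rewrite /adjmx map_trmx. Qed.

Lemma unitary_adj {R : realType} {n} (U : 'M[R[i]]_n) : U \is unitarymx ->
  U *m adjmx U = 1%:M /\ adjmx U *m U = 1%:M.
Proof.
move=> uU; have h1 : U *m adjmx U = 1%:M by rewrite -adjmx_tC; apply/eqP.
split=> //; have Uu := unitarymx_unit uU.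
have := invmx_unitary uU; rewrite adjmx_tC => <-; exact: mulVmx.
Qed.

Definition eig {R : realType} {n} (M : 'M[R[i]]_n) (j : 'I_n) : R :=
  complex.Re (spectral_diag M 0 j).
Definition fcalc {R : realType} {n} (U : 'M[R[i]]_n) (d : 'I_n -> R) :=
  adjmx U *m diag_mx (\row_j ((d j)%:C)%C) *m U.

Lemma herm_hermsym {R : realType} {n} (M : 'M[R[i]]_n) : M = adjmx M -> M \is hermsymmx.
Proof. by move=> h; apply/is_hermitianmxP; rewrite expr0 scale1r adjmx_tC. Qed.

Lemma spec_herm {R : realType} {n} (M : 'M[R[i]]_n) : M = adjmx M ->
  M = fcalc (spectralmx M) (eig M).
Proof.
move=> h; have hn := hermitian_normalmx (herm_hermsym h).
have rl := hermitian_spectral_diag_real (herm_hermsym h).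
rewrite /fcalc -adjmx_tC -invmx_unitary ?spectral_unitarymx //.
rewrite {1}(orthomx_spectralP hn); congr (_ *m diag_mx _ *m _).
apply/rowP=> j; rewrite !mxE /eig.
have zr : spectral_diag M 0 j \is Num.real by move/mxOverP: rl; apply.
by rewrite RRe_real.
Qed.

Lemma mxfun_fcalc {R : realType} {n} (f : R -> R) (M : 'M[R[i]]_n) :
  mxfun f M = fcalc (spectralmx M) (fun j => f (eig M j)).
Proof.
rewrite /mxfun /fcalc -adjmx_tC -invmx_unitary ?spectral_unitarymx //.
by congr (_ *m diag_mx _ *m _); apply/rowP=> j; rewrite !mxE.
Qed.

Lemma unitary_spec {R : realType} {n} (M : 'M[R[i]]_n) :
  spectralmx M *m adjmx (spectralmx M) = 1%:M /\ adjmx (spectralmx M) *m spectralmx M = 1%:M.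
Proof. exact/unitary_adj/spectral_unitarymx. Qed.

Lemma fcalcM {R : realType} {n} (U : 'M[R[i]]_n) d1 d2 : U *m adjmx U = 1%:M ->
  fcalc U d1 *m fcalc U d2 = fcalc U (fun j => d1 j * d2 j).
Proof.
move=> uU; rewrite /fcalc !mulmxA -[_ *m _ *m adjmx U]mulmxA uU mulmx1.
rewrite -[_ *m diag_mx _ *m diag_mx _]mulmxA mulmx_diag; congr (_ *m diag_mx _ *m _).
by apply/rowP=> j; rewrite !mxE rmorphM.
Qed.

Lemma fcalc_herm {R : realType} {n} (U : 'M[R[i]]_n) d : adjmx (fcalc U d) = fcalc U d.
Proof.
rewrite /fcalc !adjmxM adjmxK adjmx_diag mulmxA; congr (_ *m diag_mx _ *m _).
by apply/rowP=> j; rewrite !mxE; apply: conjc_real.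
Qed.

Definition sq {R : realType} (z : R[i]) : R := complex.Re (z * Num.conj z).
Lemma sq_ge0 {R : realType} (z : R[i]) : 0 <= sq z.
Proof. case: z => a b; rewrite /sq /=; nra. Qed.
Lemma mul_conj_sq {R : realType} (z : R[i]) : z * Num.conj z = ((sq z)%:C)%C.
Proof.
case: z => a b; rewrite /sq /=; apply/eqP; rewrite eq_complex /=.
rewrite eqxx /=; apply/eqP; ring.
Qed.
Lemma realC_sum {R : realType} (I : finType) (F : I -> R) :
  ((\sum_i F i)%:C = \sum_i (F i)%:C)%C.
Proof. exact: rmorph_sum. Qed.
Lemma realC_mul {R : realType} (a b : R) : ((a * b)%:C = a%:C * b%:C)%C.
Proof. exact: rmorphM. Qed.
Lemma realC_add {R : realType} (a b : R) : ((a + b)%:C = a%:C + b%:C)%C.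
Proof. exact: rmorphD. Qed.
Lemma conjR {R : realType} (a : R) : Num.conj ((a%:C)%C) = ((a%:C)%C).
Proof. exact: conjc_real. Qed.
Definition qf {R : realType} {n} (t : 'rV[R[i]]_n) (M : 'M[R[i]]_n) : R[i] :=
  (t *m M *m adjmx t) 0 0.
Lemma qf_fcalc {R : realType} {n} (t : 'rV[R[i]]_n) (U : 'M[R[i]]_n) d :
  qf t (fcalc U d) = ((\sum_i d i * sq ((t *m adjmx U) 0 i))%:C)%C.
Proof.
rewrite /qf /fcalc !mulmxA -(mulmxA _ U) -{2}(adjmxK U) -adjmxM.
set w := t *m adjmx U.
rewrite mxE realC_sum; apply: eq_bigr => i _.
rewrite mul_mx_diag [w]lock !mxE -lock realC_mul -mul_conj_sq.
rewrite /adjmx !mxE; ring.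
Qed.
Lemma row_unit {R : realType} {n} (U : 'M[R[i]]_n) j : U *m adjmx U = 1%:M ->
  row j U *m adjmx U = delta_mx 0 j.
Proof. by move=> h; rewrite -row_mul h row1. Qed.
Lemma sq_delta {R : realType} {n} (j i : 'I_n) :
  sq ((delta_mx 0 j : 'rV[R[i]]_n) 0 i) = (i == j)%:R.
Proof.
rewrite mxE eqxx /= eq_sym; case: eqP => _ /=; rewrite /sq /=.
  by rewrite mulr1n /=; simpc.
by rewrite mulr0n; simpc.
Qed.
Lemma qf_fcalc_row {R : realType} {n} (U : 'M[R[i]]_n) d j : U *m adjmx U = 1%:M ->
  qf (row j U) (fcalc U d) = ((d j)%:C)%C.
Proof.
move=> h; rewrite qf_fcalc row_unit // (bigD1 j) //= big1 => [|k kj].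
  by rewrite sq_delta eqxx mulr1 addr0.
by rewrite sq_delta (negbTE kj) mulr0.
Qed.
Lemma eig_qf {R : realType} {n} (M : 'M[R[i]]_n) j : M = adjmx M ->
  ((eig M j)%:C)%C = qf (row j (spectralmx M)) M.
Proof.
move=> h; rewrite {3}(spec_herm h) qf_fcalc_row //; exact: (unitary_spec M).1.
Qed.
Lemma ge0_realC {R : realType} (z : R[i]) : 0 <= z -> z = ((complex.Re z)%:C)%C.
Proof. by case: z => a b; rewrite lecE /= => /andP[/eqP-> _]. Qed.
Lemma realC_ge0 {R : realType} (a : R) : (0 <= (a%:C)%C) = (0 <= a).
Proof. exact: ler0c. Qed.
Lemma psd_eig_ge0 {R : realType} {n} (M : 'M[R[i]]_n) j : psd M -> 0 <= eig M j.
Proof. by case=> h q; rewrite -realC_ge0 eig_qf //; apply: q. Qed.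
Lemma psd_fcalc {R : realType} {n} (U : 'M[R[i]]_n) d : (forall j, 0 <= d j) ->
  psd (fcalc U d).
Proof.
move=> d0; split; first by rewrite fcalc_herm.
move=> v; rewrite -/(qf v _) qf_fcalc realC_ge0 sumr_ge0 // => i _.
by rewrite mulr_ge0 // sq_ge0.
Qed.
Lemma psd_congr {R : realType} {n m} (M : 'M[R[i]]_n) (B : 'M[R[i]]_(m,n)) :
  psd M -> psd (B *m M *m adjmx B).
Proof.
case=> h q; split; first by rewrite !adjmxM adjmxK -h mulmxA.
by move=> v; rewrite !mulmxA -(mulmxA _ (adjmx B) (adjmx v)) -adjmxM; apply: q.
Qed.
Lemma psd_add {R : realType} {n} (M N : 'M[R[i]]_n) : psd M -> psd N -> psd (M + N).
Proof.
case=> h1 q1 [h2 q2]; split; first by rewrite adjmxD -h1 -h2.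
by move=> v; rewrite mulmxDr mulmxDl mxE addr_ge0.
Qed.
Lemma psd_scale {R : realType} {n} (M : 'M[R[i]]_n) (c : R) : 0 <= c -> psd M ->
  psd ((c%:C)%C *: M).
Proof.
move=> c0 [h q]; split; first by rewrite adjmxZ -h conjR.
by move=> v; rewrite -scalemxAr -scalemxAl mxE mulr_ge0 // realC_ge0.
Qed.
Lemma psd0 {R : realType} {n} : psd (0 : 'M[R[i]]_n).
Proof. by split; [rewrite adjmx0 | move=> v; rewrite mulmx0 mul0mx mxE]. Qed.
Lemma psd_sum {R : realType} {n} (I : finType) (F : I -> 'M[R[i]]_n) (P : pred I) :
  (forall i, P i -> psd (F i)) -> psd (\sum_(i | P i) F i).
Proof.
move=> h; elim/big_ind: _ => //; [exact: psd0 | exact: psd_add].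
Qed.
Lemma qf_ge0 {R : realType} {n} (M : 'M[R[i]]_n) t : psd M -> 0 <= qf t M.
Proof. by case=> _ q; apply: q. Qed.

Lemma dotmx_adj {R : realType} {n} (u v : 'rV[R[i]]_n) :
  dotmx u v = (u *m adjmx v) 0 0.
Proof. by rewrite dotmxE adjmx_tC. Qed.
Lemma vec_CS {R : realType} {n} (u v : 'rV[R[i]]_n) :
  `|(u *m adjmx v) 0 0| ^+ 2 <= (u *m adjmx u) 0 0 * (v *m adjmx v) 0 0.
Proof.
rewrite -!dotmx_adj; exact: (@CauchySchwarz (R[i]) _ (@dotmx (R[i]) n) u v).1.
Qed.
Lemma norm2_sq {R : realType} (w : R[i]) : `|w| ^+ 2 = ((sq w)%:C)%C.
Proof. by rewrite normCK mul_conj_sq. Qed.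
Definition msqrt {R : realType} {n} (M : 'M[R[i]]_n) :=
  fcalc (spectralmx M) (fun j => Num.sqrt (eig M j)).
Lemma msqrt_herm {R : realType} {n} (M : 'M[R[i]]_n) : adjmx (msqrt M) = msqrt M.
Proof. exact: fcalc_herm. Qed.
Lemma msqrt_sq {R : realType} {n} (M : 'M[R[i]]_n) : psd M -> msqrt M *m msqrt M = M.
Proof.
move=> pM; rewrite /msqrt fcalcM; last exact: (unitary_spec M).1.
rewrite [RHS](spec_herm pM.1); congr fcalc; apply: funext => j.
by rewrite -expr2 sqr_sqrtr // psd_eig_ge0.
Qed.
Lemma psd_qf_real {R : realType} {n} (M : 'M[R[i]]_n) t : psd M ->
  qf t M = ((complex.Re (qf t M))%:C)%C.
Proof. by move=> pM; apply/ge0_realC/qf_ge0. Qed.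
Lemma psd_CS {R : realType} {n} (M : 'M[R[i]]_n) (z y : 'rV[R[i]]_n) : psd M ->
  sq ((z *m M *m adjmx y) 0 0) <= complex.Re (qf z M) * complex.Re (qf y M).
Proof.
move=> pM; set r := msqrt M.
have e1 : forall a b : 'rV[R[i]]_n, a *m M *m adjmx b = (a *m r) *m adjmx (b *m r).
  by move=> a b; rewrite adjmxM msqrt_herm -mulmxA -(mulmxA a) (mulmxA r) msqrt_sq.
have := vec_CS (z *m r) (y *m r).
rewrite -!e1 norm2_sq -/(qf z M) -/(qf y M) (psd_qf_real z pM) (psd_qf_real y pM).
by rewrite -realC_mul lecR.
Qed.

Lemma tr_fcalc {R : realType} {n} (U : 'M[R[i]]_n) d : U *m adjmx U = 1%:M ->
  \tr (fcalc U d) = \sum_j ((d j)%:C)%C.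
Proof.
move=> h; rewrite /fcalc mxtrace_mulC mulmxA h mul1mx mxtrace_diag.
by apply: eq_bigr => j _; rewrite mxE.
Qed.
Lemma row_fcalc {R : realType} {n} (U : 'M[R[i]]_n) d j : U *m adjmx U = 1%:M ->
  row j U *m fcalc U d = ((d j)%:C)%C *: row j U.
Proof.
move=> h; rewrite /fcalc !mulmxA row_unit // -rowE -row_mul.
rewrite [diag_mx _ *m U]mul_diag_mx; apply/rowP => k; rewrite !mxE.
by [].
Qed.
Lemma fcalc_one {R : realType} {n} (U : 'M[R[i]]_n) : adjmx U *m U = 1%:M ->
  fcalc U (fun _ => 1) = 1%:M.
Proof.
move=> h; rewrite /fcalc.
have -> : diag_mx (\row_j ((1 : R)%:C)%C) = 1%:M :> 'M[R[i]]_n.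
  by apply/matrixP => a b; rewrite !mxE.
by rewrite mulmx1.
Qed.
Lemma fcalc_ext {R : realType} {n} (U : 'M[R[i]]_n) d1 d2 : (forall j, d1 j = d2 j) ->
  fcalc U d1 = fcalc U d2.
Proof. by move=> h; congr fcalc; apply: funext. Qed.
Lemma qf_lin {R : realType} {n} t (M N : 'M[R[i]]_n) (c : R[i]) :
  qf t (c *: M - N) = c * qf t M - qf t N.
Proof.
by rewrite /qf mulmxBr mulmxBl -scalemxAr -scalemxAl !mxE.
Qed.
Lemma qf_row_unit {R : realType} {n} (U : 'M[R[i]]_n) j : U *m adjmx U = 1%:M ->
  qf (row j U) 1%:M = 1.
Proof.
move=> h; transitivity ((U *m adjmx U) j j); last by rewrite h mxE eqxx.
rewrite /qf mulmx1 !mxE; apply: eq_bigr => k _; rewrite !mxE //.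
Qed.

Definition pw {R : realType} (t x : R) := if x <= 0 then 0 else x `^ t.
Definition hinv {R : realType} (x : R) := if x <= 0 then 0 else x^-1.
Lemma ReC {R : realType} (x : R) : complex.Re ((x%:C)%C) = x.
Proof. by []. Qed.
Lemma per_j {R : realType} {n} (sig rho : 'M[R[i]]_n) (c al : R) (j : 'I_n) :
  psd sig -> psd rho -> 0 < c -> psd ((c%:C)%C *: sig - rho) -> 1 < al ->
  pw al (eig (mxpow sig ((1 - al) / (2 * al)) *m rho *m mxpow sig ((1 - al) / (2 * al))) j)
  <= c `^ (al - 1) *
     (if 0 < eig (mxpow sig ((1 - al) / (2 * al)) *m rho *m mxpow sig ((1 - al) / (2 * al))) j
      then complex.Re (qf (row j (spectralmx (mxpow sig ((1 - al) / (2 * al)) *m rho *m mxpow sig ((1 - al) / (2 * al)))) *m mxpow sig ((1 - al) / (2 * al)) *m rho) 1%:M)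
           / eig (mxpow sig ((1 - al) / (2 * al)) *m rho *m mxpow sig ((1 - al) / (2 * al))) j
      else 0).
Proof.
move=> ps pr c0 pc a1.
set S := mxpow sig _. set X := S *m rho *m S. set t := row j _ *m S *m rho.
set s := (1 - al) / (2 * al).
set Q := spectralmx sig; set lam := eig sig.
have [QQ1 QQ2] := unitary_spec sig.
have SE : S = fcalc Q (fun i => pw s (lam i)) by rewrite /S /mxpow mxfun_fcalc.
have Sh : adjmx S = S by rewrite SE fcalc_herm.
clearbody S.
have pX : psd X by have := psd_congr S pr; rewrite Sh.
set P := spectralmx X; set e := eig X j.
have [PP1 PP2] := unitary_spec X.
have XE : X = fcalc P (eig X) := spec_herm pX.1.
set p := row j P.
have pX1 : p *m X = ((e%:C)%C) *: p by rewrite {1}XE row_fcalc.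
have pp : (p *m adjmx p) 0 0 = 1 by have := qf_row_unit j PP1; rewrite /qf mulmx1.
have qpX : qf p X = ((e%:C)%C).
  by rewrite /qf pX1 -scalemxAl mxE pp mulr1.
have rh : adjmx rho = rho by rewrite -pr.1.
have tadj : adjmx t = rho *m S *m adjmx p.
  by rewrite /t (adjmxM (p *m S) rho) (adjmxM p S) rh Sh mulmxA.
case: (ltP 0 e) => e0; last first.
  by rewrite /pw e0 mulr0.
rewrite /pw (lt_geF e0).
set a := fun i => sq ((t *m adjmx Q) 0 i).
have a0 : forall i, 0 <= a i by move=> i; exact: sq_ge0.
have sumA : complex.Re (qf t 1%:M) = \sum_i a i.
  rewrite -(fcalc_one QQ2) qf_fcalc ReC; apply: eq_bigr => i _; by rewrite mul1r.
have E2 : e ^+ 2 = \sum_i pw s (lam i) * pw s (lam i) * a i.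
  have h1 : qf t (S *m S) = ((e ^+ 2)%:C)%C.
    rewrite /qf tadj.
    have -> : t *m (S *m S) *m (rho *m S *m adjmx p) = p *m X *m X *m adjmx p.
      by rewrite /t /X !mulmxA.
    rewrite pX1 -scalemxAl pX1 scalerA -scalemxAl mxE pp mulr1 -realC_mul expr2 //.
  have h2 : S *m S = fcalc Q (fun i => pw s (lam i) * pw s (lam i)) by rewrite SE fcalcM.
  by move: h1; rewrite h2 qf_fcalc => /complexI ->.
have lam0 : forall i, 0 <= lam i by move=> i; exact: psd_eig_ge0.
set Sp := fcalc Q (fun i => hinv (lam i)).
set L := \sum_i hinv (lam i) * a i.
have qL : qf t Sp = ((L%:C)%C) by rewrite qf_fcalc.
have hinv0 : forall x : R, 0 <= hinv x.
  by move=> x; rewrite /hinv; case: ifP => // /negbT; rewrite -ltNge => /ltW; rewrite invr_ge0.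
have L0 : 0 <= L by apply: sumr_ge0 => i _; rewrite mulr_ge0.
have sigE : sig = fcalc Q lam := spec_herm ps.1.
have Sph : adjmx Sp = Sp by rewrite fcalc_herm.
have SpSSp : Sp *m sig *m Sp = Sp.
  rewrite sigE /Sp !fcalcM //; apply: fcalc_ext => i; rewrite /hinv.
  case: ifP => [_|/negbT]; first by rewrite !mul0r.
  rewrite -ltNge => l0; field; exact: lt0r_neq0.
clearbody Sp.
have Lc : L <= c * e.
  set y := p *m S; set z := t *m Sp.
  have ty : t = y *m rho by [].
  have yadj : adjmx y = S *m adjmx p by rewrite /y adjmxM Sh.
  have ezy : (z *m rho *m adjmx y) 0 0 = qf t Sp.
    by rewrite /qf tadj /z yadj !mulmxA.
  have qzs : qf z sig = qf t Sp.
    rewrite /qf /z adjmxM Sph !mulmxA.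
    have -> : t *m Sp *m sig *m Sp = t *m (Sp *m sig *m Sp) by rewrite !mulmxA.
    by rewrite SpSSp.
  have qyr : qf y rho = qf p X by rewrite /qf yadj /X /y !mulmxA.
  have CS := psd_CS z y pr.
  rewrite ezy qL qyr qpX ReC in CS.
  have pz := qf_ge0 z pc.
  rewrite qf_lin qzs qL (psd_qf_real z pr) -realC_mul -rmorphB realC_ge0 in pz.
  have : sq ((L%:C)%C) = L ^+ 2 by rewrite /sq conjR -realC_mul ReC expr2.
  move=> sqL; rewrite sqL in CS.
  have h1 : L * L <= L * (c * e).
    have : complex.Re (qf z rho) * e <= c * L * e by rewrite ler_pM2r //; lra.
    rewrite expr2 in CS; move=> h; apply: le_trans (le_trans CS h) _.
    by rewrite le_eqVlt; apply/orP; left; apply/eqP; ring.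
  have [->|Lp] := eqVneq L 0; first by rewrite mulr_ge0 // ltW.
  have Lp' : 0 < L by rewrite lt0r Lp L0.
  by rewrite -(ler_pM2l Lp').
pose b := fun i => if 0 < lam i then a i / (lam i * e) else 0.
have b0 : forall i, 0 <= b i.
  move=> i; rewrite /b; case: ifP => // l0.
  by rewrite divr_ge0 // mulr_ge0 // ltW.
have ne0 : e != 0 by rewrite gt_eqF.
have eEq : e = \sum_i b i * lam i `^ (al^-1).
  have -> : e = e ^+ 2 / e by rewrite expr2 mulfK.
  rewrite E2 mulr_suml; apply: eq_bigr => i _; rewrite /b /pw.
  have [l0|lp] := leP (lam i) 0; first by rewrite !mul0r.
  rewrite -powRD; last by apply/implyP => _; rewrite gt_eqF.
  have -> : s + s = al^-1 - 1.
    by rewrite /s; field; rewrite gt_eqF //; lra.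
  rewrite powRB; last by apply/implyP => _; rewrite gt_eqF.
  rewrite powRr1 ?ltW //; field; apply/andP; split => //; rewrite gt_eqF //.
have sb : \sum_i b i <= c.
  have -> : \sum_i b i = L / e.
    rewrite /L mulr_suml; apply: eq_bigr => i _; rewrite /b /hinv.
    have [l0|lp] := leP (lam i) 0; first by rewrite !mul0r.
    by field; apply/andP; split => //; rewrite gt_eqF.
  by rewrite ler_pdivrMr.
have J := jensen_pow a1 c0 e0 b0 lam0 eEq sb.
apply: (le_trans J); rewrite ler_wpM2l ?powR_ge0 // sumA mulr_suml.
apply: ler_sum => i _; rewrite /b.
have [l0|lp] := leP (lam i) 0.
  by rewrite mul0r divr_ge0 // ltW.
rewrite le_eqVlt; apply/orP; left; apply/eqP; field.
by apply/andP; split; rewrite gt_eqF.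
Qed.

Lemma diag_qf {R : realType} {m n} (A : 'M[R[i]]_(m, n)) (M : 'M[R[i]]_n) k :
  (A *m M *m adjmx A) k k = qf (row k A) M.
Proof.
rewrite /qf -row_mul !mxE; apply: eq_bigr => l _; rewrite !mxE //.
Qed.
Lemma tr_congr_ge0 {R : realType} {n m} (B : 'M[R[i]]_(m, n)) (M : 'M[R[i]]_n) :
  psd M -> 0 <= \tr (B *m M *m adjmx B).
Proof.
move=> pM; rewrite /mxtrace; apply: sumr_ge0 => k _; rewrite diag_qf; exact: qf_ge0.
Qed.
Lemma Re_ge0 {R : realType} (z : R[i]) : 0 <= z -> 0 <= complex.Re z.
Proof. by case: z => a b; rewrite lecE /= => /andP[]. Qed.
Lemma ReD {R : realType} (z w : R[i]) : complex.Re (z + w) = complex.Re z + complex.Re w.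
Proof. by case: z; case: w. Qed.
Lemma tr_proj_le {R : realType} {n m} (V : 'M[R[i]]_(m, n)) (rho : 'M[R[i]]_n) :
  psd rho -> V *m adjmx V *m V = V ->
  complex.Re (\tr (V *m rho *m adjmx V)) <= complex.Re (\tr rho).
Proof.
move=> pr VV.
set Pi := adjmx V *m V.
set B := 1%:M - Pi.
have Pih : adjmx Pi = Pi by rewrite /Pi adjmxM adjmxK.
have PiPi : Pi *m Pi = Pi by rewrite /Pi !mulmxA -(mulmxA (adjmx V)) -(mulmxA (adjmx V)) VV.
have Bh : adjmx B = B by rewrite /B adjmxB adjmx1 Pih.
have BB : B *m B = B.
  by rewrite /B mulmxBl !mulmxBr !mulmx1 !mul1mx PiPi subrr subr0.
have t1 : \tr (V *m rho *m adjmx V) = \tr (rho *m Pi).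
  by rewrite -mulmxA mxtrace_mulC /Pi mulmxA.
have t2 : \tr (B *m rho *m adjmx B) = \tr (rho *m B).
  by rewrite Bh -mulmxA mxtrace_mulC -mulmxA BB.
have e1 : \tr rho = \tr (V *m rho *m adjmx V) + \tr (B *m rho *m adjmx B).
  by rewrite t1 t2 -mxtraceD -mulmxDr /B addrC subrK mulmx1.
rewrite e1 ReD lerDl; apply: Re_ge0; exact: tr_congr_ge0.
Qed.
Lemma row_diag {R : realType} {m n} (d : 'rV[R[i]]_m) (A : 'M[R[i]]_(m, n)) j :
  row j (diag_mx d *m A) = d 0 j *: row j A.
Proof. by rewrite mul_diag_mx; apply/rowP => k; rewrite !mxE. Qed.
Lemma qfZ {R : realType} {n} (a : R[i]) (w : 'rV[R[i]]_n) M :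
  qf (a *: w) M = a * Num.conj a * qf w M.
Proof.
by rewrite /qf adjmxZ -scalemxAl -scalemxAl -scalemxAr !mxE mulrA.
Qed.
Lemma psd1 {R : realType} {n} : psd (1%:M : 'M[R[i]]_n).
Proof.
split; first by rewrite adjmx1.
move=> v; rewrite mulmx1 mxE; apply: sumr_ge0 => k _; rewrite !mxE mul_conj_sq realC_ge0.
exact: sq_ge0.
Qed.
Lemma diag_mulE {R : realType} {n} (d1 d2 : 'rV[R[i]]_n) :
  diag_mx d1 *m diag_mx d2 = diag_mx (\row_j (d1 0 j * d2 0 j)).
Proof. by rewrite mulmx_diag. Qed.
Lemma bessel {R : realType} {n} (S rho : 'M[R[i]]_n) : adjmx S = S -> psd rho ->
  \sum_j (if 0 < eig (S *m rho *m S) j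
          then complex.Re (qf (row j (spectralmx (S *m rho *m S)) *m S *m rho) 1%:M)
                 / eig (S *m rho *m S) j else 0) <= complex.Re (\tr rho).
Proof.
move=> Sh pr.
set X := S *m rho *m S.
have pX : psd X by have := psd_congr S pr; rewrite Sh.
set P := spectralmx X; set e := eig X.
have [PP1 PP2] := unitary_spec X.
have XE : X = fcalc P e := spec_herm pX.1.
have rhoh : adjmx rho = rho by rewrite -pr.1.
set r := msqrt rho.
have rr : r *m r = rho by exact: msqrt_sq.
have rh : adjmx r = r by exact: msqrt_herm.
clearbody r.
pose g := fun j => if 0 < e j then (Num.sqrt (e j))^-1 else 0.
pose D := diag_mx (\row_j ((g j)%:C)%C) : 'M[R[i]]_n.
have Dh : adjmx D = D.
  by rewrite /D adjmx_diag; congr diag_mx; apply/rowP => k; rewrite !mxE conjR.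
pose V := D *m P *m S *m r.
have rowV : forall j, row j V = ((g j)%:C)%C *: (row j P *m S *m r).
  by move=> j; rewrite /V /D -!mulmxA row_diag mxE !row_mul.
have C1 : \sum_j (if 0 < e j then complex.Re (qf (row j P *m S *m rho) 1%:M) / e j else 0)
          = complex.Re (\tr (V *m rho *m adjmx V)).
  have eqs : forall j, (V *m rho *m adjmx V) j j =
            (((if 0 < e j then complex.Re (qf (row j P *m S *m rho) 1%:M) / e j else 0))%:C)%C.
    move=> j.
    rewrite diag_qf rowV qfZ conjR -realC_mul.
    have -> : qf (row j P *m S *m r) rho = qf (row j P *m S *m rho) 1%:M.
      rewrite /qf mulmx1 !adjmxM rh rhoh !mulmxA -rr.
      have -> : row j P *m S *m r *m (r *m r) *m r = row j P *m S *m (r *m r) *m (r *m r).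
        by rewrite !mulmxA.
      by [].
    rewrite (psd_qf_real _ psd1) -realC_mul /g.
    case: ifP => ep; last by rewrite !mul0r.
    congr ((_)%:C)%C; rewrite -expr2 exprVn sqr_sqrtr ?ltW //; by rewrite mulrC.
  by rewrite /mxtrace (eq_bigr _ (fun j _ => eqs j)) -realC_sum ReC.
have C2 : V *m adjmx V *m V = V.
  have VV : V *m adjmx V = D *m diag_mx (\row_j ((e j)%:C)%C) *m D.
    rewrite /V !adjmxM rh Sh Dh !mulmxA.
    have -> : D *m P *m S *m r *m r *m S *m adjmx P *m D
              = D *m (P *m X *m adjmx P) *m D.
      by rewrite /X -rr !mulmxA.
    congr (_ *m _ *m _).
    rewrite XE /fcalc !mulmxA PP1 mul1mx -mulmxA PP1 mulmx1 //.
  rewrite VV /V !mulmxA.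
  have -> : D *m diag_mx (\row_j ((e j)%:C)%C) *m D *m D = D.
    rewrite /D !diag_mulE; congr diag_mx; apply/rowP => k; rewrite !mxE /g.
    case: ifP => ep; last by rewrite !mul0r.
    rewrite -!realC_mul; congr ((_)%:C)%C.
    have sp : 0 < Num.sqrt (e k) by rewrite sqrtr_gt0.
    have se : e k = Num.sqrt (e k) ^+ 2 by rewrite sqr_sqrtr // ltW.
    rewrite {2}se; field; exact: lt0r_neq0.
  by [].
rewrite C1; exact: tr_proj_le.
Qed.

Lemma main_ineq {R : realType} {n} (sig rho : 'M[R[i]]_n) (c al : R) :
  psd sig -> psd rho -> 0 < c -> psd ((c%:C)%C *: sig - rho) -> 1 < al ->
  complex.Re (\tr (mxpow (mxpow sig ((1 - al) / (2 * al)) *m rho *m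
                          mxpow sig ((1 - al) / (2 * al))) al))
  <= c `^ (al - 1) * complex.Re (\tr rho).
Proof.
move=> ps pr c0 pc a1.
have Sh : adjmx (mxpow sig ((1 - al) / (2 * al))) = mxpow sig ((1 - al) / (2 * al)).
  by rewrite /mxpow mxfun_fcalc fcalc_herm.
have B := bessel Sh pr.
set S := mxpow sig _.
rewrite /mxpow.
rewrite mxfun_fcalc tr_fcalc; last exact: (unitary_spec _).1.
rewrite -realC_sum ReC.
apply: le_trans (ler_wpM2l (powR_ge0 _ _) B).
rewrite mulr_sumr; apply: ler_sum => j _.
exact: (per_j j ps pr c0 pc a1).
Qed.

Notation idx := mxtens.mxtens_index.
Definition Femb {R : realType} {nB nE : nat} (b : 'I_nB) : 'M[R[i]]_(nB * nE, nE) :=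
  \matrix_(k, i) ((k == idx (b, i))%:R).
Definition blk {R : realType} {nB nE : nat} (b : 'I_nB) (M : 'M[R[i]]_(nB * nE)) : 'M[R[i]]_nE :=
  \matrix_(i, j) M (idx (b, i)) (idx (b, j)).
Lemma idx_eq {nB nE : nat} (b1 b : 'I_nB) (i1 i : 'I_nE) :
  (idx (b1, i1) == idx (b, i)) = (b1 == b) && (i1 == i).
Proof. by rewrite (inj_eq (can_inj (@mxtens.mxtens_indexK _ _))) xpair_eqE. Qed.
Lemma blkE {R : realType} {nB nE : nat} (b : 'I_nB) (M : 'M[R[i]]_(nB * nE)) :
  blk b M = adjmx (Femb b) *m M *m Femb b.
Proof.
apply/matrixP => i j; rewrite !mxE (bigD1 (idx (b, j))) //= big1 => [|l lj]; last first.
  by rewrite !mxE (negbTE lj) mulr0.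
rewrite !mxE eqxx mulr1 addr0 (bigD1 (idx (b, i))) //= big1 => [|k ki]; last first.
  by rewrite !mxE (negbTE ki) rmorph0 mul0r.
by rewrite !mxE eqxx rmorph1 mul1r addr0.
Qed.
Lemma tensdE {R : realType} {nB nE : nat} (b : 'I_nB) (X : 'M[R[i]]_nE) :
  tens (delta_mx b b) X = Femb b *m X *m adjmx (Femb b).
Proof.
apply/matrixP => k l.
case: (mxtens.mxtens_indexP k) => b1 i1; case: (mxtens.mxtens_indexP l) => b2 i2.
rewrite /tens mxtens.tensmxE !mxE.
have [->|nb1] := eqVneq b1 b; last first.
  rewrite /= mul0r big1 // => j _.
  by rewrite !mxE big1 ?mul0r // => i _; rewrite !mxE idx_eq (negbTE nb1) mul0r.
have FX : forall j, (Femb b *m X) (idx (b, i1)) j = X i1 j.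
  move=> j; rewrite mxE (bigD1 i1) //= big1 => [|i ii]; first by rewrite mxE idx_eq !eqxx mul1r addr0.
  by rewrite mxE idx_eq eqxx /= eq_sym (negbTE ii) mul0r.
under eq_bigr do rewrite FX.
have [->|nb2] := eqVneq b2 b.
  rewrite /= mul1r (bigD1 i2) //= big1 => [|j ji]; first by rewrite !mxE idx_eq !eqxx rmorph1 mulr1 addr0.
  by rewrite !mxE idx_eq eqxx /= eq_sym (negbTE ji) rmorph0 mulr0.
rewrite /= mul0r big1 // => j _; by rewrite !mxE idx_eq (negbTE nb2) rmorph0 mulr0.
Qed.
Lemma psd_tensd {R : realType} {nB nE : nat} (b : 'I_nB) (X : 'M[R[i]]_nE) :
  psd X -> psd (tens (delta_mx b b) X).
Proof. by move=> pX; rewrite tensdE; exact: psd_congr. Qed.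
Lemma psd_blk {R : realType} {nB nE : nat} (b : 'I_nB) (M : 'M[R[i]]_(nB * nE)) :
  psd M -> psd (blk b M).
Proof. by move=> pM; rewrite blkE -{2}(adjmxK (Femb b)); exact: psd_congr. Qed.
Lemma ptrace_blk {R : realType} {nB nE : nat} (M : 'M[R[i]]_(nB * nE)) :
  ptrace1 M = \sum_b blk b M.
Proof. by apply/matrixP => i j; rewrite summxE !mxE; apply: eq_bigr => b _; rewrite mxE. Qed.
Lemma tens_sum2 {R : realType} {m nE : nat} (A : 'M[R[i]]_m) (I : finType) (X : I -> 'M[R[i]]_nE) :
  tens A (\sum_i X i) = \sum_i tens A (X i).
Proof.
apply/matrixP => k l; rewrite /tens summxE !mxE summxE mulr_sumr.
by apply: eq_bigr => i _; rewrite !mxE.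
Qed.
Lemma tens_sum1 {R : realType} {m nE : nat} (I : finType) (A : I -> 'M[R[i]]_m) (X : 'M[R[i]]_nE) :
  tens (\sum_i A i) X = \sum_i tens (A i) X.
Proof.
apply/matrixP => k l; rewrite /tens summxE !mxE summxE mulr_suml.
by apply: eq_bigr => i _; rewrite !mxE.
Qed.
Lemma tensZ2 {R : realType} {m nE : nat} (A : 'M[R[i]]_m) (a : R[i]) (X : 'M[R[i]]_nE) :
  tens A (a *: X) = a *: tens A X.
Proof. by apply/matrixP => k l; rewrite /tens !mxE mulrCA. Qed.
Lemma tens1_sum {R : realType} {nB nE : nat} (X : 'M[R[i]]_nE) :
  tens (1%:M : 'M[R[i]]_nB) X = \sum_b tens (delta_mx b b) X.
Proof. by rewrite (@mx1_sum_delta _ nB) tens_sum1. Qed.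
Lemma psd_tens1_ptrace {R : realType} {nB nE : nat} (M : 'M[R[i]]_(nB * nE)) :
  psd M -> psd (tens (1%:M : 'M[R[i]]_nB) (ptrace1 M)).
Proof.
move=> pM; rewrite tens1_sum; apply: psd_sum => b' _.
rewrite ptrace_blk tens_sum2; apply: psd_sum => b _.
by apply: psd_tensd; apply: psd_blk.
Qed.
Lemma blk_cl {R : realType} {nB nE : nat} (om : 'I_nB -> 'M[R[i]]_nE) b :
  blk b (\sum_(b' < nB) tens (delta_mx b' b') (om b')) = om b.
Proof.
apply/matrixP => i j; rewrite !mxE summxE (bigD1 b) //= big1 => [|b' nb].
  by rewrite /tens mxtens.tensmxE !mxE eqxx mul1r addr0.
by rewrite /tens mxtens.tensmxE !mxE eq_sym (negbTE nb) mul0r.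
Qed.
Lemma psd_cl {R : realType} {nB nE : nat} (M : 'M[R[i]]_(nB * nE)) :
  psd M -> classical_B M -> psd (tens (1%:M : 'M[R[i]]_nB) (ptrace1 M) - M).
Proof.
move=> pM [om Me].
have pom : forall b, psd (om b) by move=> b; rewrite -(blk_cl om b) -Me; exact: psd_blk.
have -> : ptrace1 M = \sum_b om b.
  by rewrite ptrace_blk; apply: eq_bigr => b _; rewrite Me blk_cl.
rewrite tens1_sum Me.
have -> : \sum_(b' < nB) tens (delta_mx b' b') (\sum_b om b) - \sum_(b' < nB) tens (delta_mx b' b') (om b')
  = \sum_(b' < nB) \sum_(b | b != b') tens (delta_mx b' b') (om b).
  rewrite -sumrB; apply: eq_bigr => b' _.
  by rewrite tens_sum2 (bigD1 b') //= addrAC subrr add0r.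
apply: psd_sum => b' _; apply: psd_sum => b _; exact: psd_tensd.
Qed.

Lemma sq_eq0 {R : realType} (w : R[i]) : sq w = 0 -> w = 0.
Proof.
case: w => a b; rewrite /sq /= => h.
have ha : a = 0 by nra.
have hb : b = 0 by nra.
by rewrite ha hb.
Qed.
Lemma supp_of_le {R : realType} {n} (sig rho : 'M[R[i]]_n) (c : R) :
  psd sig -> psd rho -> 0 < c -> psd ((c%:C)%C *: sig - rho) -> supp_sub rho sig.
Proof.
move=> ps pr c0 pc.
set Q := spectralmx sig; set lam := eig sig.
have [QQ1 QQ2] := unitary_spec sig.
have sigE : sig = fcalc Q lam := spec_herm ps.1.
have key : forall i, lam i <= 0 -> rho *m adjmx (row i Q) = 0.
  move=> i li; set q := row i Q.
  have qs : qf q sig = ((lam i)%:C)%C by rewrite /q /lam eig_qf //; exact: ps.1.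
  have h1 := qf_ge0 q pc.
  rewrite qf_lin qs (psd_qf_real q pr) -realC_mul -rmorphB realC_ge0 in h1.
  have h2 := Re_ge0 (qf_ge0 q pr).
  have h3 : complex.Re (qf q rho) = 0.
    apply/eqP; rewrite eq_le h2 andbT; apply: le_trans (_ : c * lam i <= 0); first by lra.
    by rewrite mulr_ge0_le0 // ltW.
  apply/matrixP => a k; rewrite ord1 [RHS]mxE.
  have CS := psd_CS (delta_mx 0 a) q pr.
  rewrite h3 mulr0 in CS.
  have : sq (((delta_mx 0 a : 'rV[R[i]]_n) *m rho *m adjmx q) 0 0) = 0.
    by apply: le_anti; rewrite CS sq_ge0.
  move/sq_eq0; rewrite -mulmxA mxE (bigD1 a) //= big1 => [|b ba]; last by rewrite mxE (negbTE ba) mul0r.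
  by rewrite mxE !eqxx mulr1n mul1r addr0.
pose ind := fun i => if lam i <= 0 then (0 : R) else 1.
have colQ : forall a i, (rho *m adjmx Q) a i = (rho *m adjmx (row i Q)) a 0.
  by move=> a i; rewrite !mxE; apply: eq_bigr => k _; rewrite !mxE.
have rhoind : rho *m fcalc Q ind = rho.
  rewrite /fcalc !mulmxA.
  have -> : rho *m adjmx Q *m diag_mx (\row_j ((ind j)%:C)%C) = rho *m adjmx Q.
    rewrite mul_mx_diag; apply/matrixP => a i; rewrite mxE.
    rewrite colQ; case: (boolP (lam i <= 0)) => li.
      by rewrite key // !mxE mul0r.
    by rewrite [X in _ * X]mxE /ind (negbTE li) mulr1.
  by rewrite -mulmxA QQ2 mulmx1.
have indE : fcalc Q ind = fcalc Q (fun i => hinv (lam i)) *m sig.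
  rewrite sigE fcalcM //; apply: fcalc_ext => i; rewrite /ind /hinv.
  case: ifP => li; first by rewrite mul0r.
  by rewrite mulVf // gt_eqF // ltNge li.
rewrite /supp_sub -rhoind indE mulmxA; exact: submxMl.
Qed.

Lemma ln2_gt0 {R : realType} : 0 < ln (2 : R).
Proof. by apply: ln_gt0; lra. Qed.
Lemma pow2_log2 {R : realType} (x : R) : 0 < x -> 2 `^ (log2 x) = x.
Proof.
move=> x0; rewrite /powR /log2 (_ : (2 : R) == 0 = false); last by apply/negbTE; lra.
rewrite divfK ?gt_eqF ?ln2_gt0 //; exact: lnK.
Qed.
Lemma pow2_mlog2 {R : realType} (x : R) : 0 < x -> 2 `^ (- log2 x) = x^-1.
Proof. by move=> x0; rewrite powRN pow2_log2. Qed.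
Lemma log2_0 {R : realType} : log2 (0 : R) = 0.
Proof. by rewrite /log2 ln0 // mul0r. Qed.
Lemma powR_inv {R : realType} (x r : R) : 0 < x -> (x^-1) `^ r = x `^ (- r).
Proof.
move=> x0; rewrite /powR invr_eq0 gt_eqF // lnV ?posrE //.
by rewrite mulrN mulNr.
Qed.

Unset Implicit Arguments.
Theorem claimC14 (R : realType) (A : finType) (nB nE : nat)
  (p : A -> R) (rhoBE : A -> 'M[R[i]]_(nB * nE)) :
  (forall a, 0 <= p a) -> \sum_(a : A) p a = 1 ->
  (forall a, 0 < p a -> density (rhoBE a) /\ classical_B (rhoBE a)) ->
  forall a, 0 < p a ->
    (forall alpha : R, 1 <= alpha ->
       (exp2e ((alpha - 1)%:E * D_alpha alpha (rhoBE a) (tens 1%:M (rhoE p rhoBE)))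
        <= (p a `^ (1 - alpha))%:E)%E)
    /\ (D_max (rhoBE a) (tens 1%:M (rhoE p rhoBE)) <= (- log2 (p a))%:E)%E.
Proof.
move=> p0 psum hd a pa.
set sig := tens 1%:M (rhoE p rhoBE).
set rho := rhoBE a.
have [[pr tr1] clr] := hd a pa.
set c := (p a)^-1.
have c0 : 0 < c by rewrite invr_gt0.
pose T := fun a' => tens (1%:M : 'M[R[i]]_nB) (ptrace1 (rhoBE a')).
have termP : forall a' (k : R), 0 <= k -> psd (((k * p a')%:C)%C *: T a').
  move=> a' k k0; have [p'0|p'0] := eqVneq (p a') 0.
    by rewrite p'0 mulr0 scale0r; exact: psd0.
  apply: psd_scale; first by rewrite mulr_ge0.
  apply: psd_tens1_ptrace; apply: (hd a' _).1.1.
  by rewrite lt0r p'0 p0.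
have sigE : sig = \sum_a' ((p a')%:C)%C *: T a'.
  by rewrite /sig /rhoE tens_sum2; apply: eq_bigr => a' _; rewrite tensZ2.
have ps : psd sig.
  rewrite sigE; apply: psd_sum => a' _.
  by have := termP a' 1 ler01; rewrite mul1r.
have pc : psd ((c%:C)%C *: sig - rho).
  have -> : (c%:C)%C *: sig = \sum_a' (((c * p a')%:C)%C *: T a').
    by rewrite sigE scaler_sumr; apply: eq_bigr => a' _; rewrite scalerA realC_mul.
  rewrite (bigD1 a) //= /c mulVf ?gt_eqF // scale1r addrAC.
  apply: psd_add; first exact: psd_cl.
  by apply: psd_sum => a' _; apply: termP; rewrite invr_ge0 ltW.
have pa1 : p a <= 1.
  by rewrite -psum (bigD1 a) //= lerDl sumr_ge0.
split.
- move=> al a1; rewrite /D_alpha; case: eqP => [->|an1].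
    by rewrite subrr mul0e /= !powRr0.
  have al1 : 1 < al by rewrite lt_neqAle eq_sym a1 andbT; apply/eqP.
  rewrite /D_sand (supp_of_le ps pr c0 pc) /=.
  set Qv := complex.Re (\tr _).
  have trr : complex.Re (\tr rho) = 1 by rewrite tr1.
  rewrite trr divr1 mulrA mulfV ?mul1r; last by rewrite subr_eq0 gt_eqF.
  rewrite lee_fin.
  have MI := main_ineq ps pr c0 pc al1.
  rewrite trr mulr1 in MI.
  have cp : c `^ (al - 1) = p a `^ (1 - al) by rewrite /c powR_inv // opprB.
  have [Q0|Q0] := ltP 0 Qv.
    by rewrite pow2_log2 // -cp.
  rewrite /log2 ln0 // mul0r powRr0 -cp.
  apply: (le_trans (_ : 1 <= 1 `^ (al - 1))); first by rewrite powR1.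
  apply: ge0_ler_powR.
  + by rewrite subr_ge0.
  + by rewrite nnegrE.
  + by rewrite nnegrE ltW.
  + by rewrite /c invf_ge1.
- rewrite /D_max.
  have hl : loewner_le rho (((2 `^ (- log2 (p a)))%:C)%C *: sig).
    by rewrite /loewner_le pow2_mlog2.
  apply: ereal_inf_lbound.
  by exists (- log2 (p a)).
Qed.
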